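(* Let $n\ge2$ and $1/n\le t\le 1/(n-1)$. Then $P(t)=E_t$.
   Context: $E_t=\{\mathbf{p}\in\mathbb{R}^n:\mathbf{p}\cdot\mathbf{p}\le t,\ \sum_i\mathbf{p}_i=1\}$ and $P(t)=\{\mathbf{p}\in\mathbb{R}^n:\mathbf{p}\ge0,\ \sum_i\mathbf{p}_i=1,\ \mathbf{p}\cdot\mathbf{p}\le t\}$. *)

(* Defs.v *)
From mathcomp Require Import all_boot all_order all_algebra.
From mathcomp Require Import classical_sets.
Set Implicit Arguments. Unset Strict Implicit. Unset Printing Implicit Defensive.
Import Order.TTheory GRing.Theory Num.Theory.
Local Open Scope ring_scope.
Local Open Scope classical_set_scope.

Definition dotv (R : pzRingType) (n : nat) (p q : 'rV[R]_n) : R :=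
  \sum_(i < n) p 0 i * q 0 i.

Definition E_set (R : realFieldType) (n : nat) (t : R) : set 'rV[R]_n :=
  [set p : 'rV[R]_n | dotv p p <= t /\ \sum_(i < n) p 0 i = 1].

Definition P_set (R : realFieldType) (n : nat) (t : R) : set 'rV[R]_n :=
  [set p : 'rV[R]_n | (forall i, 0 <= p 0 i) /\ \sum_(i < n) p 0 i = 1 /\ dotv p p <= t].

(* Main.v *)
Require Import Defs.
From mathcomp Require Import all_boot all_order all_algebra.
From mathcomp Require Import classical_sets.
From mathcomp Require Import ring lra.
Import Order.TTheory GRing.Theory Num.Theory.
Local Open Scope ring_scope.

Theorem lemma4 (R : realFieldType) (n : nat) (t : R) :
  (2 <= n)%N -> n%:R^-1 <= t -> t <= (n.-1)%:R^-1 ->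
  @P_set R n t = @E_set R n t.
Proof.
move=> hn h1 h2; apply/seteqP; split => p /=.
  by case=> _ [s d]; split.
case=> d s; split; last by split.
move=> j; rewrite leNgt; apply/negP => hneg.
set m : R := (n.-1)%:R.
have hm : 0 < m by rewrite /m ltr0n; case: n hn {h1 h2 m p d s j hneg} => [|[|k]].
have hmt : t * m <= 1.
  by move: h2; rewrite -[_^-1]mul1r ler_pdivlMr.
set c := (1 - p 0 j) / m.
have hc : c * m = 1 - p 0 j by rewrite /c divfK // gt_eqF.
have key : 0 <= \sum_(i < n | i != j) (p 0 i - c) ^+ 2.
  by apply: sumr_ge0 => i _; apply: sqr_ge0.
have E : \sum_(i < n | i != j) (p 0 i - c) ^+ 2 =
   \sum_(i < n | i != j) p 0 i * p 0 i - c *+ 2 * \sum_(i < n | i != j) p 0 i + c ^+ 2 * m.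
  rewrite (eq_bigr (fun i => (p 0 i * p 0 i - c *+ 2 * p 0 i) + c ^+ 2)); last first.
    by move=> i _; rewrite sqrrB; ring.
  rewrite big_split /= sumrB -mulr_sumr sumr_const.
  by rewrite cardC1 card_ord /m mulr_natr.
rewrite (bigD1 j) //= in s; rewrite /dotv (bigD1 j) //= in d; move: s d => s d.
move: key s d hc hneg; rewrite E.
set S1 := \sum_(i < n | i != j) p 0 i.
set S2 := \sum_(i < n | i != j) p 0 i * p 0 i.
set x := p 0 j.
move=> key s d hc hneg.
have S1e : S1 = 1 - x by lra.
have k2 : 0 <= m * S2 - (1 - x) ^+ 2.
  have H : 0 <= m * (S2 - c *+ 2 * S1 + c ^+ 2 * m) by apply: mulr_ge0 => //; lra.
  have -> : m * S2 - (1 - x) ^+ 2 = m * (S2 - c *+ 2 * S1 + c ^+ 2 * m).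
    have -> : m * (S2 - c *+ 2 * S1 + c ^+ 2 * m) = m * S2 - (c * m) *+ 2 * S1 + (c * m) ^+ 2.
      by ring.
    by rewrite hc S1e; ring.
  exact: H.
have k3 : m * S2 <= 1 - m * (x * x).
  have : m * (x * x + S2) <= m * t by rewrite ler_pM2l.
  nra.
have k4 : 0 <= m * (x * x) by apply: mulr_ge0 => //; nra.
have k5 : 0 <= x * x by nra.
have k6 : (1 - x) ^+ 2 = 1 - 2 * x + x * x by ring.
lra.
Qed.
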